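(* The extended Schr\''odinger-Virasoro algebra $\hat{\mathfrak{so}}$ has no nontrivial $\frac12$-derivations; i.e., every $\frac12$-derivation of $\hat{\mathfrak{so}}$ is a scalar multiple of the identity map.
   Context: The extended Schr\''odinger-Virasoro algebra $\hat{\mathfrak{so}}$ is the complex Lie algebra with basis $\{L_n,M_n,N_n,Y_{n+\frac12},C_L,C_{LN},C_N\mid n\in\mathbb{Z}\}$ and brackets (all others zero, $C_L,C_{LN},C_N$ central): $[L_m,L_n]=(n-m)L_{m+n}+\delta_{m+n,0}\frac{m^3-m}{12}C_L$, $[L_m,M_n]=nM_{m+n}$, $[L_m,N_n]=nN_{m+n}+\delta_{m+n,0}(m^2-m)C_{LN}$, $[N_m,M_n]=2M_{m+n}$, $[L_m,Y_{n+\frac12}]=(n+\frac{1-m}{2})Y_{m+n+\frac12}$, $[N_m,Y_{n+\frac12}]=Y_{m+n+\frac12}$, $[Y_{m+\frac12},Y_{n+\frac12}]=(m-n)M_{m+n+1}$, $[N_m,N_n]=n\delta_{m+n,0}C_N$, for all $m,n\in\mathbb{Z}$. A $\frac12$-derivation of a Lie algebra $L$ is a linear map $\varphi:L\to L$ with $\varphi([x,y])=\frac12([\varphi(x),y]+[x,\varphi(y)])$ for all $x,y$; it is trivial if it is multiplication by a scalar. *)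

(* Defs.v *)
From HB Require Import structures.
From mathcomp Require Import all_boot all_algebra.
From mathcomp Require Import complex Rstruct.
From mathcomp Require Import finmap.
From mathcomp.multinomials Require Import monalg.

Set Implicit Arguments.
Unset Strict Implicit.
Unset Printing Implicit Defensive.

Import GRing.Theory.
Local Open Scope ring_scope.

Definition C : fieldType := complex Rdefinitions.R.

(* Basis of so^ :  bL n = L_n, bM n = M_n, bN n = N_n,
   bY n = Y_{n+1/2}, bCL = C_L, bCLN = C_{LN}, bCN = C_N. *)
Inductive sob : Type :=
| bL of int | bM of int | bN of int | bY of int | bCL | bCLN | bCN.

Definition sob_enc (b : sob) : nat * int :=
  match b with
  | bL n => (0%N, n) | bM n => (1%N, n) | bN n => (2%N, n) | bY n => (3%N, n)
  | bCL => (4%N, 0) | bCLN => (5%N, 0) | bCN => (6%N, 0)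
  end.

Definition sob_dec (p : nat * int) : option sob :=
  match p with
  | (0, n) => Some (bL n) | (1, n) => Some (bM n) | (2, n) => Some (bN n)
  | (3, n) => Some (bY n) | (4, _) => Some bCL | (5, _) => Some bCLN
  | (6, _) => Some bCN | _ => None
  end%N.

Lemma sob_encK : pcancel sob_enc sob_dec.
Proof. by case. Qed.

HB.instance Definition _ := Countable.copy sob (pcan_type sob_encK).

Definition so : lmodType C := {malg C[sob]}.

Definition bv (b : sob) : so := << b >>.

Definition delta0 (k : int) : C := if k == 0 then 1 else 0.

Definition ic (k : int) : C := k%:~R.

Definition br (a b : sob) : so :=
  match a, b with
  | bL m, bL n => ic (n - m) *: bv (bL (m + n))
                  + (delta0 (m + n) * (ic (m ^+ 3 - m) / 12%:R)) *: bv bCL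
  | bL m, bM n => ic n *: bv (bM (m + n))
  | bM n, bL m => - (ic n *: bv (bM (m + n)))
  | bL m, bN n => ic n *: bv (bN (m + n))
                  + (delta0 (m + n) * ic (m ^+ 2 - m)) *: bv bCLN
  | bN n, bL m => - (ic n *: bv (bN (m + n))
                  + (delta0 (m + n) * ic (m ^+ 2 - m)) *: bv bCLN)
  | bN m, bM n => 2%:R *: bv (bM (m + n))
  | bM n, bN m => - (2%:R *: bv (bM (m + n)))
  | bL m, bY n => (ic n + ic (1 - m) / 2%:R) *: bv (bY (m + n))
  | bY n, bL m => - ((ic n + ic (1 - m) / 2%:R) *: bv (bY (m + n)))
  | bN m, bY n => bv (bY (m + n))
  | bY n, bN m => - bv (bY (m + n))
  | bY m, bY n => ic (m - n) *: bv (bM (m + n + 1))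
  | bN m, bN n => (ic n * delta0 (m + n)) *: bv bCN
  | _, _ => 0
  end.

Definition lie (x y : so) : so :=
  \sum_(a <- msupp x) \sum_(b <- msupp y) (x@_a * y@_b) *: br a b.

Definition half_derivation (phi : so -> so) : Prop :=
  forall x y : so, phi (lie x y) = 2%:R^-1 *: (lie (phi x) y + lie x (phi y)).

Definition trivial_map (phi : so -> so) : Prop :=
  exists c : C, forall x : so, phi x = c *: x.

(* Main.v *)
Require Import Defs.
From mathcomp Require Import all_boot all_algebra.
From mathcomp Require Import complex Rstruct.
From mathcomp.multinomials Require Import monalg.
From mathcomp Require Import finmap zify ring lra.
Import GRing.Theory Num.Theory.
Local Open Scope ring_scope.


Lemma ic_eq0 (k : int) : (ic k == 0) = (k == 0).
Proof. rewrite /ic. exact: (@intr_eq0 (complex Rdefinitions.R)). Qed.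

Lemma bv_coef (a e : sob) : (bv a)@_e = (a == e)%:R.
Proof. by rewrite /bv mcoeffU. Qed.

Lemma test (m n : int) : (bL m == bY n) = false.
Proof. by []. Qed.
Lemma test2 (m n : int) : (bL m == bL n) = (m == n).
Proof. by []. Qed.
Lemma mcoeffZ' (c : C) (g : so) k : (c *: g)@_k = c * g@_k.
Proof. exact: mcoeffZ. Qed.

Lemma msupp_bv b : msupp (bv b) = [fset b]%fset.
Proof. by rewrite /bv msuppU oner_eq0. Qed.

Lemma lieL_coef (u : so) b e : (lie u (bv b))@_e = \sum_(a <- msupp u) u@_a * (br a b)@_e.
Proof.
rewrite /lie raddf_sum /=; apply: eq_bigr => a _.
by rewrite msupp_bv big_seq_fset1 bv_coef eqxx mulr1 mcoeffZ'.
Qed.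

Lemma lieR_coef (u : so) a e : (lie (bv a) u)@_e = \sum_(f <- msupp u) u@_f * (br a f)@_e.
Proof.
rewrite /lie msupp_bv big_seq_fset1 raddf_sum /=; apply: eq_bigr => f _.
by rewrite bv_coef eqxx mul1r mcoeffZ'.
Qed.

Lemma lie_bv a b : lie (bv a) (bv b) = br a b.
Proof. by rewrite /lie !msupp_bv !big_seq_fset1 !bv_coef !eqxx mulr1 scale1r. Qed.

Lemma extract (u : so) (F : sob -> C) a0 :
  (forall a, a \in msupp u -> a != a0 -> F a = 0) ->
  \sum_(a <- msupp u) u@_a * F a = u@_a0 * F a0.
Proof.
move=> H; case: (boolP (a0 \in msupp u)) => Ha0.
  rewrite (big_fsetD1 a0) //= big1_fset ?addr0 // => a.
  by rewrite in_fsetD1 => /andP [na ina] _; rewrite H ?mulr0.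
rewrite big1_fset; first by rewrite mcoeff_outdom ?mul0r.
move=> a ina _; rewrite H ?mulr0 //; apply: contraNneq Ha0 => <-; exact: ina.
Qed.
Lemma mcoeffD' (x y : so) k : (x + y)@_k = x@_k + y@_k.
Proof. exact: mcoeffD. Qed.
Lemma mcoeffN' (x : so) k : (- x)@_k = - x@_k.
Proof. exact: mcoeffN. Qed.
Lemma mcoeff0' k : (0 : so)@_k = 0.
Proof. exact: mcoeff0. Qed.
Definition coefE := (mcoeffD', mcoeffN', mcoeffZ', bv_coef, mcoeff0').

Definition deg2 (b : sob) : int :=
  match b with
  | bL n | bM n | bN n => n + n
  | bY n => n + n + 1
  | _ => 0
  end.

Lemma eq_deg x e : deg2 x != deg2 e -> (x == e) = false.
Proof. by apply: contraNF => /eqP ->. Qed.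

Lemma hom a b e : deg2 e != deg2 a + deg2 b -> (br a b)@_e = 0.
Proof.
case: a => [m|m|m|m|||]; case: b => [n|n|n|n|||] => /= H; rewrite /br ?coefE /delta0.
all: try (case: ifP => /eqP E).
all: rewrite ?(mul0r, mulr0, addr0, add0r, oppr0, scale0r) ?eq_deg ?(mul0r, mulr0, addr0, add0r, oppr0) //=.
all: lia.
Qed.


Lemma natC_neq0 n : (n.+1%:R : C) != 0.
Proof. have := @pnatr_eq0 (complex Rdefinitions.R) n.+1. by move=> /= ->. Qed.

Lemma two_neq0 : (2%:R : C) != 0.
Proof. exact: natC_neq0. Qed.

Lemma half_double (x : C) : x = (x + x) / 2%:R.
Proof. by rewrite -mulr2n -[x *+ 2]mulr_natr mulfK ?two_neq0. Qed.

Lemma brL0 f : br (bL 0) f = (ic (deg2 f) / 2%:R) *: bv f.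
Proof.
case: f => [n|n|n|n|||] /=; rewrite /br ?add0r ?subr0 /ic ?(oppr0, mulr0, mul0r, scale0r, addr0).
- by rewrite intrD -half_double.
- by rewrite intrD -half_double.
- by rewrite intrD -half_double.
- by rewrite !intrD mulrDl -half_double.
- by [].
- by [].
- by [].
Qed.

Lemma lieL0 (u : so) e : (lie (bv (bL 0)) u)@_e = ic (deg2 e) / 2 * u@_e.
Proof.
rewrite lieR_coef (@extract u _ e) => [|f _ nfe]; rewrite brL0 mcoeffZ' bv_coef.
  by rewrite eqxx mulr1 mulrC.
by rewrite (negbTE nfe) mulr0.
Qed.


Lemma hd_coef (phi : {linear so -> so}) (H : half_derivation phi) a b e :
  (phi (br a b))@_e = 2%:R^-1 * ((lie (phi (bv a)) (bv b))@_e + (lie (bv a) (phi (bv b)))@_e).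
Proof. by rewrite -lie_bv H mcoeffZ' mcoeffD'. Qed.

Lemma L0eq (phi : {linear so -> so}) (H : half_derivation phi) b e :
  ic (deg2 b) / 2 * (phi (bv b))@_e =
  2%:R^-1 * ((lie (phi (bv (bL 0))) (bv b))@_e + ic (deg2 e) / 2 * (phi (bv b))@_e).
Proof. by rewrite -lieL0 -hd_coef // brL0 linearZ /= mcoeffZ'. Qed.

Ltac smp := rewrite ?(mulr0, mul0r, oppr0, addr0, add0r, mulr1, mul1r, subr0, scale0r).

Ltac close_eqs := repeat match goal with |- context[(?x == ?y :> int)] => case: (x =P y) => ? end;
  try (exfalso; lia); smp.

Lemma eq_sob (x y : sob) : (x == y) = (sob_enc x == sob_enc y).
Proof. by []. Qed.

Lemma cZ c x e : (c *: bv x)@_e = c * (x == e)%:R.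
Proof. by rewrite mcoeffZ' bv_coef. Qed.
Lemma cZZ c d x y e : (c *: bv x + d *: bv y)@_e = c * (x == e)%:R + d * (y == e)%:R.
Proof. by rewrite mcoeffD' [X in X + _]mcoeffZ' [X in _ + X]mcoeffZ' !bv_coef. Qed.
Lemma cNZZ c d x y e : (- (c *: bv x + d *: bv y))@_e = - (c * (x == e)%:R + d * (y == e)%:R).
Proof. by rewrite mcoeffN' cZZ. Qed.
Lemma cNZ c x e : (- (c *: bv x))@_e = - (c * (x == e)%:R).
Proof. by rewrite mcoeffN' cZ. Qed.
Lemma cNB x e : (- bv x)@_e = - (x == e)%:R.
Proof. by rewrite mcoeffN' bv_coef. Qed.
Ltac coefs := rewrite ?cNZZ ?cZZ ?cNZ ?cZ ?cNB ?bv_coef ?mcoeff0'.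
Ltac brc := move=> [m|m|m|m|||] Hin; rewrite ?eq_sob ?xpair_eqE /= => Hne; rewrite /br; coefs; rewrite ?eq_sob ?xpair_eqE /=; close_eqs.

Ltac brv := rewrite /br; coefs; rewrite ?eq_sob ?xpair_eqE /=; close_eqs.

Lemma L0eq' (phi : {linear so -> so}) (H : half_derivation phi) b e :
  (lie (phi (bv (bL 0))) (bv b))@_e = ic (deg2 b + deg2 b - deg2 e) / 2 * (phi (bv b))@_e.
Proof.
have := L0eq phi H b e.
set p := (phi (bv b))@_e; set X := (lie _ _)@_e; set d := ic (deg2 b); set k := ic (deg2 e).
move=> E.
have E' : X = 2 * (d / 2 * p) - k / 2 * p.
  by rewrite E mulrA divff ?two_neq0 // mul1r addrK.
rewrite E' /ic intrB intrD -/d -/k.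
by field.
Qed.

Lemma ic0 : ic 0 = 0.
Proof. by rewrite /ic. Qed.

Lemma ic_neq0 k : k != 0 -> ic k != 0.
Proof. by rewrite ic_eq0. Qed.

Lemma mul_eq0_r (x y : C) : y != 0 -> x * y = 0 -> x = 0.
Proof. by move=> hy /eqP; rewrite mulf_eq0 (negbTE hy) orbF => /eqP. Qed.

Lemma AM0 (phi : {linear so -> so}) (H : half_derivation phi) j :
  (phi (bv (bL 0)))@_(bM j) = 0.
Proof.
have := L0eq' phi H (bN j) (bM (j + j)).
rewrite lieL_coef (@extract _ _ (bM j)); last by brc.
have -> : (br (bM j) (bN j))@_(bM (j + j)) = -2 by brv.
rewrite /= (_ : j + j + (j + j) - (j + j + (j + j)) = 0) ?ic0 ?mul0r; last by ring.
apply: mul_eq0_r; by rewrite oppr_eq0 two_neq0.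
Qed.

Lemma AN0 (phi : {linear so -> so}) (H : half_derivation phi) j :
  (phi (bv (bL 0)))@_(bN j) = 0.
Proof.
have [->|jn0] := eqVneq j 0.
  have := L0eq' phi H (bM 0) (bM 0).
  rewrite lieL_coef (@extract _ _ (bN 0)); last by brc; rewrite ?ic0 ?mul0r.
  have -> : (br (bN 0) (bM 0))@_(bM 0) = 2 by brv.
  rewrite /= (_ : 0 + 0 - (0 + 0) = 0 :> int) ?ic0 ?mul0r; last by ring.
  apply: mul_eq0_r; exact: two_neq0.
have := L0eq' phi H (bL j) (bN (j + j)).
rewrite lieL_coef (@extract _ _ (bN j)); last by brc.
have -> : (br (bN j) (bL j))@_(bN (j + j)) = - ic j by brv.
rewrite /= (_ : j + j + (j + j) - (j + j + (j + j)) = 0) ?ic0 ?mul0r; last by ring.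
apply: mul_eq0_r; by rewrite oppr_eq0 ic_neq0.
Qed.

Lemma AL0 (phi : {linear so -> so}) (H : half_derivation phi) j :
  j != 0 -> (phi (bv (bL 0)))@_(bL j) = 0.
Proof.
move=> jn0.
have := L0eq' phi H (bM j) (bM (j + j)).
rewrite lieL_coef (@extract _ _ (bL j)); last first.
  brc; try by [].
  have Em : m = j by lia.
  by move: Hin; rewrite Em -mcoeff_neq0 AN0 // eqxx.
have -> : (br (bL j) (bM j))@_(bM (j + j)) = ic j by brv.
rewrite /= (_ : j + j + (j + j) - (j + j + (j + j)) = 0) ?ic0 ?mul0r; last by ring.
apply: mul_eq0_r; by rewrite ic_neq0.
Qed.

Lemma AY0 (phi : {linear so -> so}) (H : half_derivation phi) n :
  (phi (bv (bL 0)))@_(bY n) = 0.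
Proof.
set a := (phi (bv (bL 0)))@_(bY n).
set B := (phi (bv (bN 0)))@_(bY n).
set P := (phi (bv (bN 1)))@_(bY (n + 1)).
have E1 := L0eq' phi H (bN 0) (bY n).
rewrite lieL_coef (@extract _ _ (bY n)) in E1; last by brc.
have v1 : (br (bY n) (bN 0))@_(bY n) = -1 by brv.
rewrite v1 /= -/a -/B in E1.
have E3 := L0eq' phi H (bN 1) (bY (n + 1)).
rewrite lieL_coef (@extract _ _ (bY n)) in E3; last by brc.
have v3 : (br (bY n) (bN 1))@_(bY (n + 1)) = -1 by brv.
rewrite v3 /= -/a -/P in E3.
have E2 := hd_coef phi H (bN 0) (bN 1) (bY (n + 1)).
have z : br (bN 0) (bN 1) = 0.
  by rewrite /br /delta0 add0r /= mulr0 scale0r.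
rewrite z linear0 mcoeff0' lieL_coef (@extract _ _ (bY n)) in E2; last by brc.
rewrite lieR_coef (@extract _ _ (bY (n + 1))) in E2; last by brc.
have v2 : (br (bN 0) (bY (n + 1)))@_(bY (n + 1)) = 1 by brv.
rewrite v3 v2 -/B -/P in E2.
have hP : P = B.
  move/esym/eqP: E2; rewrite mulf_eq0 invr_eq0 (negbTE two_neq0) /= mulr1 mulrN1.
  by rewrite addrC subr_eq0 => /eqP.
rewrite hP in E3.
rewrite (_ : 0 + 0 + (0 + 0) - (n + n + 1) = - (n + n + 1)) in E1; last by ring.
rewrite (_ : 1 + 1 + (1 + 1) - (n + 1 + (n + 1) + 1) = 1 - (n + n)) in E3; last by ring.
rewrite /ic !(intrN, intrD, intrB) in E1 E3.
set x := n%:~R in E1 E3.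
have hB : B = 0.
  transitivity ((1%:~R - (x + x)) / 2 * B - (- (x + x + 1%:~R)) / 2 * B).
    rewrite rmorph1; by field.
  by rewrite -E3 -E1 subrr.
rewrite hB mulr0 in E1.
move: E1; apply: mul_eq0_r; by rewrite oppr_eq0 oner_eq0.
Qed.


Lemma A_supp (phi : {linear so -> so}) (H : half_derivation phi) a b e :
  a \in msupp (phi (bv (bL 0))) -> a != bL 0 -> (br a b)@_e = 0.
Proof.
case: a => [m|m|m|m|||] Hin Hne; last 3 first.
- by case: b; rewrite /br => *; rewrite mcoeff0'.
- by case: b; rewrite /br => *; rewrite mcoeff0'.
- by case: b; rewrite /br => *; rewrite mcoeff0'.
- have mn0 : m != 0 by apply: contraNneq Hne => ->.
  by move: Hin; rewrite -mcoeff_neq0 AL0 ?eqxx.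
- by move: Hin; rewrite -mcoeff_neq0 AM0 ?eqxx.
- by move: Hin; rewrite -mcoeff_neq0 AN0 ?eqxx.
- by move: Hin; rewrite -mcoeff_neq0 AY0 ?eqxx.
Qed.

Lemma Aact (phi : {linear so -> so}) (H : half_derivation phi) b e :
  (lie (phi (bv (bL 0))) (bv b))@_e =
  (phi (bv (bL 0)))@_(bL 0) * (ic (deg2 b) / 2 * (b == e)%:R).
Proof.
apply: etrans (lieL_coef _ _ _) _.
have hs : forall a, a \in msupp (phi (bv (bL 0))) -> a != bL 0 -> (fun a => (br a b)@_e) a = 0.
  move=> a Hin Hne. exact: (A_supp phi H a b e Hin Hne).
apply: etrans (@extract (phi (bv (bL 0))) (fun a => (br a b)@_e) (bL 0) hs) _.
congr (_ * _).
by rewrite brL0 cZ.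
Qed.


Lemma key (phi : {linear so -> so}) (H : half_derivation phi) b e :
  deg2 b != 0 -> deg2 e != deg2 b + deg2 b ->
  (phi (bv b))@_e = (phi (bv (bL 0)))@_(bL 0) * (b == e)%:R.
Proof.
move=> hb he.
have E0 := etrans (esym (Aact phi H b e)) (L0eq' phi H b e).
have [Ebe|ne] := eqVneq b e.
  subst e.
  rewrite eqxx mulr1 (_ : deg2 b + deg2 b - deg2 b = deg2 b) in E0; last by ring.
  rewrite mulr1.
  have h2 : ic (deg2 b) / 2 != 0 by rewrite mulf_eq0 negb_or ic_neq0 // invr_eq0 two_neq0.
  apply: (mulfI h2). rewrite -E0. exact: mulrC.
rewrite (negbTE ne) mulr0 mulr0 in E0.
rewrite mulr0. move: (etrans (mulrC _ _) (esym E0)); apply: mul_eq0_r.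
rewrite mulf_eq0 negb_or ic_neq0 ?invr_eq0 ?two_neq0 //.
by apply: contra he => /eqP Hz; apply/eqP; lia.
Qed.

Lemma side_zero (phi : {linear so -> so}) (H : half_derivation phi) a1 a2 e :
  deg2 a1 != 0 -> deg2 a2 != 0 -> deg2 a1 + deg2 a2 != 0 ->
  deg2 e = (deg2 a1 + deg2 a2) + (deg2 a1 + deg2 a2) ->
  (lie (phi (bv a1)) (bv a2))@_e = 0.
Proof.
move=> h1 h2 h12 he.
apply: etrans (lieL_coef _ _ _) _.
apply: big1_seq => f _.
have [hf|hf] := eqVneq (deg2 f) (deg2 a1 + deg2 a1).
  have hz : (br f a2)@_e = 0 by apply: hom; apply/eqP; lia.
  by rewrite [X in _ * X]hz mulr0.
rewrite [X in X * _](@key phi H a1 f h1 hf).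
have [<-|ne] := eqVneq a1 f.
  have hz : (br a1 a2)@_e = 0 by apply: hom; apply/eqP; lia.
  by rewrite [X in _ * X]hz mulr0.
by rewrite mulr0 mul0r.
Qed.

Lemma side_zeroR (phi : {linear so -> so}) (H : half_derivation phi) a1 a2 e :
  deg2 a1 != 0 -> deg2 a2 != 0 -> deg2 a1 + deg2 a2 != 0 ->
  deg2 e = (deg2 a1 + deg2 a2) + (deg2 a1 + deg2 a2) ->
  (lie (bv a1) (phi (bv a2)))@_e = 0.
Proof.
move=> h1 h2 h12 he.
apply: etrans (lieR_coef _ _ _) _.
apply: big1_seq => f _.
have [hf|hf] := eqVneq (deg2 f) (deg2 a2 + deg2 a2).
  have hz : (br a1 f)@_e = 0 by apply: hom; apply/eqP; lia.
  by rewrite [X in _ * X]hz mulr0.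
rewrite [X in X * _](@key phi H a2 f h2 hf).
have [<-|ne] := eqVneq a2 f.
  have hz : (br a1 a2)@_e = 0 by apply: hom; apply/eqP; lia.
  by rewrite [X in _ * X]hz mulr0.
by rewrite mulr0 mul0r.
Qed.

Lemma final (phi : {linear so -> so}) (H : half_derivation phi) a1 a2 b (l : C) :
  br a1 a2 = l *: bv b -> l != 0 ->
  deg2 a1 != 0 -> deg2 a2 != 0 -> deg2 b = deg2 a1 + deg2 a2 -> deg2 b != 0 ->
  phi (bv b) = (phi (bv (bL 0)))@_(bL 0) *: bv b.
Proof.
move=> hbr hl h1 h2 hdb hb.
apply/malgP => e.
apply: etrans _ (esym (cZ _ _ _)).
have [he|he] := eqVneq (deg2 e) (deg2 b + deg2 b); last exact: key.
have ne : b != e by apply/eqP => Ebe; move: he; rewrite -Ebe; lia.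
rewrite (negbTE ne) mulr0.
have E := hd_coef phi H a1 a2 e.
have L : (phi (br a1 a2))@_e = l * (phi (bv b))@_e.
  by rewrite hbr linearZ mcoeffZ'.
have h12 : deg2 a1 + deg2 a2 != 0 by rewrite -hdb.
have he' : deg2 e = (deg2 a1 + deg2 a2) + (deg2 a1 + deg2 a2) by rewrite he hdb.
have s1 := @side_zero phi H a1 a2 e h1 h2 h12 he'.
have s2 := @side_zeroR phi H a1 a2 e h1 h2 h12 he'.
have E2 := etrans (esym L) (etrans E (congr1 (fun t => 2%:R^-1 * t) (congr2 +%R s1 s2))).
clear E L; move: E2 => /= E; rewrite addr0 mulr0 in E.
by move/eqP: E; rewrite mulf_eq0 (negbTE hl) /= => /eqP.
Qed.

Lemma nz (phi : {linear so -> so}) (H : half_derivation phi) b :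
  deg2 b != 0 -> phi (bv b) = (phi (bv (bL 0)))@_(bL 0) *: bv b.
Proof.
case: b => [n|n|n|n|||] /= hb; last 3 first; try by case: hb.
- have n0 : n != 0 by apply/eqP => E; move: hb; rewrite E; lia.
  apply: (@final phi H (bL (- n)) (bL (n + n)) _ (ic (n + n - - n))); rewrite /=; try lia.
    rewrite /br (_ : - n + (n + n) = n); last by ring.
    by rewrite /delta0 (negbTE n0) mul0r scale0r addr0.
  by apply: ic_neq0; apply/eqP; lia.
- apply: (@final phi H (bN (- n)) (bM (n + n)) _ 2); rewrite /=; try lia.
    by rewrite /br (_ : - n + (n + n) = n); last by ring.
  exact: two_neq0.
- have n0 : n != 0 by apply/eqP => E; move: hb; rewrite E; lia.
  apply: (@final phi H (bL (- n)) (bN (n + n)) _ (ic (n + n))); rewrite /=; try lia.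
    rewrite /br (_ : - n + (n + n) = n); last by ring.
    by rewrite /delta0 (negbTE n0) mul0r scale0r addr0.
  by apply: ic_neq0; apply/eqP; lia.
- apply: (@final phi H (bN 1) (bY (n - 1)) _ 1); rewrite /=; try lia.
    by rewrite /br (_ : 1 + (n - 1) = n) ?scale1r; last by ring.
  exact: oner_neq0.
Qed.

Lemma lie_ZL (c : C) a b : lie (c *: bv a) (bv b) = c *: br a b.
Proof.
apply/malgP => e.
apply: etrans (lieL_coef _ _ _) _.
rewrite (@extract _ _ a).
  by rewrite cZ eqxx mulr1 mcoeffZ'.
move=> f Hf Hne; exfalso.
move/fsubsetP: (msuppZ_le c (bv a)) => /(_ f Hf).
by rewrite msupp_bv inE (negbTE Hne).
Qed.

Lemma lie_ZR (c : C) a b : lie (bv a) (c *: bv b) = c *: br a b.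
Proof.
apply/malgP => e.
apply: etrans (lieR_coef _ _ _) _.
rewrite (@extract _ _ b).
  by rewrite cZ eqxx mulr1 mcoeffZ'.
move=> f Hf Hne; exfalso.
move/fsubsetP: (msuppZ_le c (bv b)) => /(_ f Hf).
by rewrite msupp_bv inE (negbTE Hne).
Qed.

Lemma clos (phi : {linear so -> so}) (H : half_derivation phi) (c : C) a1 a2 :
  phi (bv a1) = c *: bv a1 -> phi (bv a2) = c *: bv a2 -> phi (br a1 a2) = c *: br a1 a2.
Proof.
move=> h1 h2.
rewrite -lie_bv H h1 h2 lie_ZL lie_ZR -scalerDl scalerA.
congr (_ *: _).
  by rewrite mulrC -(half_double c).
by rewrite lie_bv.
Qed.

Lemma peel (phi : {linear so -> so}) (c : C) b w l :
  l != 0 -> phi w = c *: w -> phi (w + l *: bv b) = c *: (w + l *: bv b) ->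
  phi (bv b) = c *: bv b.
Proof.
move=> hl hw; rewrite linearD linearZ hw scalerDr => /addrI.
rewrite scalerA mulrC -scalerA => /(scalerI hl).
by [].
Qed.


Lemma iz1 : (1 ^+ 3 - 1 : int) = 0. Proof. by []. Qed.
Lemma iz2 : (1 - 1 : int) = 0. Proof. by []. Qed.
Lemma iz3 : (-1 - 1 : int) = -2. Proof. by []. Qed.
Lemma iz4 : (2 ^+ 3 - 2 : int) = 6. Proof. by []. Qed.
Lemma iz5 : (2 - 2 : int) = 0. Proof. by []. Qed.
Lemma iz6 : (-2 - 2 : int) = -4. Proof. by []. Qed.
Lemma iz7 : (1 ^+ 2 - 1 : int) = 0. Proof. by []. Qed.
Lemma iz8 : (1 - 1 : int) = 0. Proof. by []. Qed.
Lemma iz9 : (-1 + 1 : int) = 0. Proof. by []. Qed.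
Lemma iz10 : ((-1) ^+ 2 - -1 : int) = 2. Proof. by []. Qed.
Lemma iz11 : (1 - 1 : int) = 0. Proof. by []. Qed.

Lemma b1 : br (bL 1) (bL (-1)) = 0 + ic (-2) *: bv (bL 0).
Proof.
rewrite /br /delta0 /=.
rewrite ?iz1.
rewrite ?iz2.
rewrite ?iz3.
by rewrite ic0 mul0r mulr0 scale0r addr0 add0r.
Qed.
Lemma b2 : br (bL 2) (bL (-2)) = ic (-4) *: bv (bL 0) + (ic 6 / 12%:R) *: bv bCL.
Proof.
rewrite /br /delta0 /=.
rewrite ?iz4.
rewrite ?iz5.
rewrite ?iz6.
by rewrite mul1r.
Qed.
Lemma b3 : br (bL 1) (bN (-1)) = 0 + ic (-1) *: bv (bN 0).
Proof.
rewrite /br /delta0 /=.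
rewrite ?iz7.
rewrite ?iz8.
by rewrite ic0 mulr0 scale0r addr0 add0r.
Qed.
Lemma b4 : br (bL (-1)) (bN 1) = ic 1 *: bv (bN 0) + ic 2 *: bv bCLN.
Proof.
rewrite /br /delta0 /=.
rewrite ?iz9.
rewrite ?iz10.
by rewrite mul1r.
Qed.
Lemma b5 : br (bN 1) (bM (-1)) = 0 + 2%:R *: bv (bM 0).
Proof.
rewrite /br /=.
rewrite ?iz11.
by rewrite add0r.
Qed.
Lemma b6 : br (bN (-1)) (bN 1) = 0 + ic 1 *: bv bCN.
Proof.
rewrite /br /delta0 /=.
by rewrite mulr1 add0r.
Qed.

Lemma phi0 (phi : {linear so -> so}) (c : C) : phi 0 = c *: 0.
Proof. apply: etrans (raddf0 phi) _; by rewrite scaler0. Qed.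

Lemma hL0 (phi : {linear so -> so}) (H : half_derivation phi) :
  phi (bv (bL 0)) = (phi (bv (bL 0)))@_(bL 0) *: bv (bL 0).
Proof.
have E := @clos phi H _ _ _ (@nz phi H (bL 1) isT) (@nz phi H (bL (-1)) isT).
rewrite b1 in E.
apply: (@peel phi _ _ _ _ _ _ E); [by apply: ic_neq0 | exact: phi0].
Qed.

Lemma hN0 (phi : {linear so -> so}) (H : half_derivation phi) :
  phi (bv (bN 0)) = (phi (bv (bL 0)))@_(bL 0) *: bv (bN 0).
Proof.
have E := @clos phi H _ _ _ (@nz phi H (bL 1) isT) (@nz phi H (bN (-1)) isT).
rewrite b3 in E.
apply: (@peel phi _ _ _ _ _ _ E); [by apply: ic_neq0 | exact: phi0].
Qed.

Lemma hM0 (phi : {linear so -> so}) (H : half_derivation phi) :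
  phi (bv (bM 0)) = (phi (bv (bL 0)))@_(bL 0) *: bv (bM 0).
Proof.
have E := @clos phi H _ _ _ (@nz phi H (bN 1) isT) (@nz phi H (bM (-1)) isT).
rewrite b5 in E.
apply: (@peel phi _ _ _ _ _ _ E); [exact: two_neq0 | exact: phi0].
Qed.

Lemma hCN (phi : {linear so -> so}) (H : half_derivation phi) :
  phi (bv bCN) = (phi (bv (bL 0)))@_(bL 0) *: bv bCN.
Proof.
have E := @clos phi H _ _ _ (@nz phi H (bN (-1)) isT) (@nz phi H (bN 1) isT).
rewrite b6 in E.
apply: (@peel phi _ _ _ _ _ _ E); [by apply: ic_neq0 | exact: phi0].
Qed.

Lemma hCL (phi : {linear so -> so}) (H : half_derivation phi) :
  phi (bv bCL) = (phi (bv (bL 0)))@_(bL 0) *: bv bCL.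
Proof.
have E := @clos phi H _ _ _ (@nz phi H (bL 2) isT) (@nz phi H (bL (-2)) isT).
rewrite b2 in E.
apply: (@peel phi _ _ _ _ _ _ E).
  rewrite mulf_eq0 negb_or ic_neq0 // invr_eq0.
  exact: natC_neq0.
rewrite linearZ_LR [in LHS](hL0 phi H) !scalerA.
congr (_ *: _); exact: mulrC.
Qed.

Lemma hCLN (phi : {linear so -> so}) (H : half_derivation phi) :
  phi (bv bCLN) = (phi (bv (bL 0)))@_(bL 0) *: bv bCLN.
Proof.
have E := @clos phi H _ _ _ (@nz phi H (bL (-1)) isT) (@nz phi H (bN 1) isT).
rewrite b4 in E.
apply: (@peel phi _ _ _ _ _ _ E); first by apply: ic_neq0.
rewrite linearZ_LR [in LHS](hN0 phi H) !scalerA.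
congr (_ *: _); exact: mulrC.
Qed.

Lemma allb (phi : {linear so -> so}) (H : half_derivation phi) b :
  phi (bv b) = (phi (bv (bL 0)))@_(bL 0) *: bv b.
Proof.
have [hb|hb] := eqVneq (deg2 b) 0; last exact: nz.
case: b hb => [n|n|n|n|||] /= hb.
- rewrite (_ : n = 0); [exact: hL0 | lia].
- rewrite (_ : n = 0); [exact: hM0 | lia].
- rewrite (_ : n = 0); [exact: hN0 | lia].
- exfalso; lia.
- exact: hCL.
- exact: hCLN.
- exact: hCN.
Qed.

Theorem mainTheorem3 (phi : {linear so -> so}) :
  half_derivation phi -> trivial_map phi.
Proof.
move=> H; exists ((phi (bv (bL 0)))@_(bL 0)) => x.
have ex : x = \sum_(k <- msupp x) x@_k *: bv k.
  rewrite {1}(monalgE x); apply: eq_bigr => k _.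
  apply/malgP => e; rewrite mcoeffU cZ.
  by rewrite mulr_natr.
rewrite ex linear_sum scaler_sumr; apply: eq_bigr => k _.
rewrite linearZ_LR [in LHS](allb phi H) !scalerA.
congr (_ *: _); exact: mulrC.
Qed.
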